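(* Let $n\ge 0$, put $N=2^n$ and $h={}_0h_n$. Define the words \begin{align*} {}_1h_{n+1}&=\delta_g(h)\,u\,\delta_g(h)\,r\,\delta_x(h)\,d\,\delta_x(h),\\ {}_2h_{n+1}&=\delta_f(h)\,u\,h\,r\,h\,d\,\delta_f(h),\\ {}_3h_{n+1}&=\delta_m(h)\,u\,\delta_g(h)\,r\,\delta_x(h)\,d\,\delta_m(h),\\ {}_4h_{n+1}&=\delta_o(h)\,u\,h\,r\,h\,d\,\delta_f(h),\\ {}_5h_{n+1}&=\delta_m(h)\,u\,\delta_g(h)\,r\,\delta_x(h)\,d\,\delta_x(h). \end{align*} Then each of these words traces a Hamiltonian path of the grid $\{0,\dots,2N-1\}^2$, with the following endpoints: \begin{enumerate} \item ${}_1h_{n+1}$ goes from $(N-1,0)$ to $(N,0)$; the endpoints are adjacent, so this is the closed Moore curve. \item ${}_2h_{n+1}$ goes from $(N-1,N-1)$ to $(N,N-1)$; the endpoints are adjacent. \item ${}_3h_{n+1}$ goes from $(0,N-1)$ to $(2N-1,N-1)$. \item ${}_4h_{n+1}$ goes from $(0,0)$ to $(N,N-1)$. \item ${}_5h_{n+1}$ goes from $(0,N-1)$ to $(N,0)$. \end{enumerate}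
   Context: Let $\Sigma=\{u,d,r,l\}$, where $u$ = up, $d$ = down, $r$ = right and $l$ = left. Set $v(u)=(0,1)$, $v(d)=(0,-1)$, $v(r)=(1,0)$ and $v(l)=(-1,0)$. For a finite word $w=w_1\cdots w_k$ over $\Sigma$ and a point $p\in\mathbb{Z}^2$, the lattice path encoded by $w$ from $p$ is the sequence $p_0=p$, $p_i=p_{i-1}+v(w_i)$ for $i=1,\dots,k$. For $m\ge 1$, say that $w$ traces a Hamiltonian path of the grid $\{0,\dots,m-1\}^2$ from $a$ to $b$ if the path encoded by $w$ from $a$ satisfies three conditions: the points $p_0,\dots,p_k$ are pairwise distinct; $\{p_0,\dots,p_k\}=\{0,\dots,m-1\}^2$, so that $k=m^2-1$; and $p_k=b$. Grid points represent the $m^2$ equal subsquares of the unit square, and consecutive points are edge-adjacent squares. Juxtaposition denotes concatenation of words. The following letter-to-letter morphisms of $\Sigma^*$ are applied letterwise: \begin{itemize} \item $\delta_o$: $u\mapsto r$, $r\mapsto u$, $d\mapsto l$, $l\mapsto d$; \item $\delta_a$: $u\mapsto l$, $r\mapsto d$, $d\mapsto r$, $l\mapsto u$; \item $\delta_g$: $u\mapsto l$, $r\mapsto u$, $d\mapsto r$, $l\mapsto d$; \item $\delta_x$: $u\mapsto r$, $r\mapsto d$, $d\mapsto l$, $l\mapsto u$; \item $\delta_f$: $u\mapsto d$, $r\mapsto l$, $d\mapsto u$, $l\mapsto r$; \item $\delta_m$: $u\mapsto d$, $r\mapsto r$, $d\mapsto u$, $l\mapsto l$. \end{itemize} The Hilbert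 words are defined recursively by ${}_0h_0=\varepsilon$ (the empty word) and \[ {}_0h_{n+1}=\delta_o({}_0h_n)\,u\,{}_0h_n\,r\,{}_0h_n\,d\,\delta_a({}_0h_n). \] For example, ${}_0h_1=urd$. *)

(* Defs.v *)
From HB Require Import structures.
From mathcomp Require Import all_boot all_order all_algebra.
Set Implicit Arguments. Unset Strict Implicit. Unset Printing Implicit Defensive.
Import Order.TTheory GRing.Theory Num.Theory.
Local Open Scope ring_scope.

Inductive letter := U | D | R | L.

Definition point := (int * int)%type.

Definition vec (a : letter) : point :=
  match a with
  | U => (0, 1) | D => (0, -1) | R => (1, 0) | L => (-1, 0)
  end.

Definition step (p : point) (a : letter) : point :=
  (p.1 + (vec a).1, p.2 + (vec a).2).

Fixpoint trace (p : point) (w : seq letter) : seq point :=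
  match w with
  | [::] => [:: p]
  | a :: w' => p :: trace (step p a) w'
  end.

Definition in_grid (m : nat) (q : point) : bool :=
  (0 <= q.1) && (q.1 < m%:Z) && (0 <= q.2) && (q.2 < m%:Z).

Definition traces_ham (m : nat) (w : seq letter) (a b : point) : Prop :=
  let ps := trace a w in
  [/\ uniq ps, (forall q : point, q \in ps <-> in_grid m q) & last a ps = b].

Definition adjacent (p q : point) : Prop :=
  (`|p.1 - q.1| + `|p.2 - q.2| = 1)%R.

Definition d_o a := match a with U => R | R => U | D => L | L => D end.
Definition d_a a := match a with U => L | R => D | D => R | L => U end.
Definition d_g a := match a with U => L | R => U | D => R | L => D end.
Definition d_x a := match a with U => R | R => D | D => L | L => U end.
Definition d_f a := match a with U => D | R => L | D => U | L => R end.
Definition d_m a := match a with U => D | R => R | D => U | L => L end.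

Fixpoint hilb (n : nat) : seq letter :=
  match n with
  | 0 => [::]
  | n'.+1 => map d_o (hilb n') ++ U :: hilb n' ++ R :: hilb n' ++ D :: map d_a (hilb n')
  end.

Definition h1 (h : seq letter) :=
  map d_g h ++ U :: map d_g h ++ R :: map d_x h ++ D :: map d_x h.
Definition h2 (h : seq letter) :=
  map d_f h ++ U :: h ++ R :: h ++ D :: map d_f h.
Definition h3 (h : seq letter) :=
  map d_m h ++ U :: map d_g h ++ R :: map d_x h ++ D :: map d_m h.
Definition h4 (h : seq letter) :=
  map d_o h ++ U :: h ++ R :: h ++ D :: map d_f h.
Definition h5 (h : seq letter) :=
  map d_m h ++ U :: map d_g h ++ R :: map d_x h ++ D :: map d_x h.

(* Main.v *)
Require Import Defs.
From HB Require Import structures.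
From mathcomp Require Import all_boot all_order all_algebra zify.
Import Order.TTheory GRing.Theory Num.Theory.
Local Open Scope ring_scope.

Lemma trace_map (f : letter -> letter) (M : point -> point)
  (hom : forall q a, step (M q) (f a) = M (step q a)) w q :
  trace (M q) (map f w) = map M (trace q w).
Proof. by elim: w q => [|a w IH] q //=; rewrite hom IH. Qed.

Lemma last_trace x q w : last x (trace q w) = last q (trace q w).
Proof. by case: w. Qed.

Lemma trace_cat p w1 a w2 :
  trace p (w1 ++ a :: w2) = trace p w1 ++ trace (step (last p (trace p w1)) a) w2.
Proof.
elim: w1 p => [|b w1 IH] p //=.
by rewrite IH [last p _]last_trace.
Qed.

Lemma last_map_trace (M : point -> point) x q w :
  last x (map M (trace q w)) = M (last q (trace q w)).
Proof. by case: w => [|a w] //=; rewrite last_map. Qed.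

Lemma mem_map_can (M N : point -> point) (c : cancel M N) (c' : cancel N M) s q :
  (q \in map M s) = (N q \in s).
Proof. by rewrite -{1}(c' q) (mem_map (can_inj c)). Qed.

Lemma uniq4 (s1 s2 s3 s4 : seq point) (G1 G2 G3 G4 : pred point)
  (u1 : uniq s1) (u2 : uniq s2) (u3 : uniq s3) (u4 : uniq s4)
  (m1 : forall x, x \in s1 -> G1 x) (m2 : forall x, x \in s2 -> G2 x)
  (m3 : forall x, x \in s3 -> G3 x) (m4 : forall x, x \in s4 -> G4 x)
  (D12 : forall x, G1 x -> G2 x -> False)
  (D13 : forall x, G1 x -> G3 x -> False)
  (D14 : forall x, G1 x -> G4 x -> False)
  (D23 : forall x, G2 x -> G3 x -> False)
  (D24 : forall x, G2 x -> G4 x -> False)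
  (D34 : forall x, G3 x -> G4 x -> False) :
  uniq (s1 ++ s2 ++ s3 ++ s4).
Proof.
rewrite !cat_uniq u1 u2 u3 u4 /= !andbT.
apply/and3P; split; apply/hasPn => x; rewrite ?mem_cat.
- case/orP => [/m2 H|/orP [/m3 H|/m4 H]]; apply/negP => /m1 H1.
  + exact: D12 H1 H.
  + exact: D13 H1 H.
  + exact: D14 H1 H.
- case/orP => [/m3 H|/m4 H]; apply/negP => /m2 H1.
  + exact: D23 H1 H.
  + exact: D24 H1 H.
- move=> /m4 H; apply/negP => /m3 H1; exact: D34 H1 H.
Qed.

Lemma ham4 (K m : nat) (h : seq letter) (f1 f2 f3 f4 : letter -> letter)
  (M1 M2 M3 M4 N1 N2 N3 N4 : point -> point) (s e b : point)
  (HT : uniq (trace (0,0) h))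
  (HG : forall q, q \in trace (0,0) h <-> in_grid K q)
  (He : last (0,0) (trace (0,0) h) = e)
  (h1 : forall q a, step (M1 q) (f1 a) = M1 (step q a))
  (h2 : forall q a, step (M2 q) (f2 a) = M2 (step q a))
  (h3 : forall q a, step (M3 q) (f3 a) = M3 (step q a))
  (h4 : forall q a, step (M4 q) (f4 a) = M4 (step q a))
  (Hs : M1 (0,0) = s)
  (H2 : step (M1 e) U = M2 (0,0))
  (H3 : step (M2 e) R = M3 (0,0))
  (H4 : step (M3 e) D = M4 (0,0))
  (Hb : M4 e = b)
  (c1 : cancel M1 N1) (c1' : cancel N1 M1)
  (c2 : cancel M2 N2) (c2' : cancel N2 M2)
  (c3 : cancel M3 N3) (c3' : cancel N3 M3)
  (c4 : cancel M4 N4) (c4' : cancel N4 M4)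
  (D12 : forall x, in_grid K (N1 x) -> in_grid K (N2 x) -> False)
  (D13 : forall x, in_grid K (N1 x) -> in_grid K (N3 x) -> False)
  (D14 : forall x, in_grid K (N1 x) -> in_grid K (N4 x) -> False)
  (D23 : forall x, in_grid K (N2 x) -> in_grid K (N3 x) -> False)
  (D24 : forall x, in_grid K (N2 x) -> in_grid K (N4 x) -> False)
  (D34 : forall x, in_grid K (N3 x) -> in_grid K (N4 x) -> False)
  (cov : forall x, in_grid m x <-> (in_grid K (N1 x) \/ in_grid K (N2 x)) \/
                                   (in_grid K (N3 x) \/ in_grid K (N4 x))) :
  traces_ham m (map f1 h ++ U :: map f2 h ++ R :: map f3 h ++ D :: map f4 h) s b.
Proof.
set T := trace (0,0) h.
have E : trace s (map f1 h ++ U :: map f2 h ++ R :: map f3 h ++ D :: map f4 h)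
         = map M1 T ++ map M2 T ++ map M3 T ++ map M4 T.
  rewrite trace_cat -Hs trace_map // last_map_trace He H2.
  rewrite trace_cat trace_map // last_map_trace He H3.
  by rewrite trace_cat trace_map // last_map_trace He H4 trace_map.
have HGb q : (q \in T) = in_grid K q by apply/idP/idP => /HG.
have mem (Mi Ni : point -> point) (ci : cancel Mi Ni) (ci' : cancel Ni Mi) q :
    (q \in map Mi T) = in_grid K (Ni q).
  by rewrite (mem_map_can _ _ ci ci') HGb.
rewrite /traces_ham E; split.
- apply: (@uniq4 _ _ _ _ (fun x => in_grid K (N1 x)) (fun x => in_grid K (N2 x))
     (fun x => in_grid K (N3 x)) (fun x => in_grid K (N4 x))) => //;
  try (rewrite map_inj_uniq //; exact: can_inj);
  try (by move=> x; rewrite ?(mem _ _ c1 c1') ?(mem _ _ c2 c2') ?(mem _ _ c3 c3') ?(mem _ _ c4 c4'));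
  assumption.
- move=> q; rewrite cov !mem_cat (mem _ _ c1 c1') (mem _ _ c2 c2') (mem _ _ c3 c3') (mem _ _ c4 c4').
  by case: (in_grid K (N1 q)); case: (in_grid K (N2 q)); case: (in_grid K (N3 q));
     case: (in_grid K (N4 q)); simpl; intuition.
- rewrite last_cat last_cat last_cat; rewrite /T last_map_trace He //.
Qed.

Ltac side := first
  [ by move=> [x y] [] ; rewrite /step /=; congr pair; lia
  | by move=> [x y] /=; congr pair; lia
  | by move=> [x y]; rewrite /in_grid /=; lia
  | by rewrite /step /=; congr pair; lia ].

Lemma hilbP n : [/\ uniq (trace (0,0) (hilb n)),
   forall q, q \in trace (0,0) (hilb n) <-> in_grid (2^n) q &
   last (0,0) (trace (0,0) (hilb n)) = ((2^n)%N%:Z - 1, 0)].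
Proof.
elim: n => [|n [HT HG He]].
  split => //= -[x y]; rewrite /in_grid inE /=; split.
  - by move/eqP => [-> ->].
  - by move=> H; apply/eqP; congr pair; lia.
have Eh : hilb n.+1 = map d_o (hilb n) ++ U :: map id (hilb n) ++ R ::
   map id (hilb n) ++ D :: map d_a (hilb n) by rewrite /= !map_id.
have Hm : (2 ^ n.+1 = 2 * 2 ^ n)%N by rewrite expnS.
set K := (2 ^ n)%N in HG He Hm *.
have : traces_ham (2 ^ n.+1) (hilb n.+1) (0,0) ((2 ^ n.+1)%N%:Z - 1, 0).
  rewrite Eh Hm.
  eapply ham4 with (K := K)
    (M1 := fun q : point => (q.2, q.1)) (N1 := fun q : point => (q.2, q.1))
    (M2 := fun q : point => (q.1, q.2 + K%:Z)) (N2 := fun q : point => (q.1, q.2 - K%:Z))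
    (M3 := fun q : point => (q.1 + K%:Z, q.2 + K%:Z)) (N3 := fun q : point => (q.1 - K%:Z, q.2 - K%:Z))
    (M4 := fun q : point => (2 * K%:Z - 1 - q.2, K%:Z - 1 - q.1))
    (N4 := fun q : point => (K%:Z - 1 - q.2, 2 * K%:Z - 1 - q.1)); try eassumption; side.
by rewrite /traces_ham => -[].
Qed.

Theorem mainTheorem1 (n : nat) :
  let N : int := (2 ^ n)%N%:Z in
  let m : nat := (2 * 2 ^ n)%N in
  let h := hilb n in
  [/\ traces_ham m (h1 h) (N - 1, 0) (N, 0) /\ adjacent (N - 1, 0) (N, 0),
      traces_ham m (h2 h) (N - 1, N - 1) (N, N - 1) /\ adjacent (N - 1, N - 1) (N, N - 1),
      traces_ham m (h3 h) (0, N - 1) (2 * N - 1, N - 1),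
      traces_ham m (h4 h) (0, 0) (N, N - 1)
    & traces_ham m (h5 h) (0, N - 1) (N, 0)].
Proof.
move=> N m h.
case: (hilbP n) => HT HG He.
rewrite /m /N; rewrite /N in He; rewrite /h.
set K := (2 ^ n)%N in HG He *.
have adj : forall x y : int, adjacent (x - 1, y) (x, y).
  by move=> x y; rewrite /adjacent /= subrr normr0 addr0 addrAC subrr add0r normrN normr1.
split; [split; [|exact: adj] | split; [|exact: adj] | | |].
- rewrite /h1.
  eapply ham4 with (K := K)
    (M1 := fun q : point => (K%:Z - 1 - q.2, q.1)) (N1 := fun q : point => (q.2, K%:Z - 1 - q.1))
    (M2 := fun q : point => (K%:Z - 1 - q.2, K%:Z + q.1)) (N2 := fun q : point => (q.2 - K%:Z, K%:Z - 1 - q.1))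
    (M3 := fun q : point => (K%:Z + q.2, 2 * K%:Z - 1 - q.1)) (N3 := fun q : point => (2 * K%:Z - 1 - q.2, q.1 - K%:Z))
    (M4 := fun q : point => (K%:Z + q.2, K%:Z - 1 - q.1))
    (N4 := fun q : point => (K%:Z - 1 - q.2, q.1 - K%:Z)); try eassumption; side.
- have -> : h2 (hilb n) = map d_f (hilb n) ++ U :: map id (hilb n) ++ R ::
     map id (hilb n) ++ D :: map d_f (hilb n) by rewrite /h2 !map_id.
  eapply ham4 with (K := K)
    (M1 := fun q : point => (K%:Z - 1 - q.1, K%:Z - 1 - q.2)) (N1 := fun q : point => (K%:Z - 1 - q.1, K%:Z - 1 - q.2))
    (M2 := fun q : point => (q.1, K%:Z + q.2)) (N2 := fun q : point => (q.1, q.2 - K%:Z))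
    (M3 := fun q : point => (K%:Z + q.1, K%:Z + q.2)) (N3 := fun q : point => (q.1 - K%:Z, q.2 - K%:Z))
    (M4 := fun q : point => (2 * K%:Z - 1 - q.1, K%:Z - 1 - q.2))
    (N4 := fun q : point => (2 * K%:Z - 1 - q.1, K%:Z - 1 - q.2)); try eassumption; side.
- rewrite /h3.
  eapply ham4 with (K := K)
    (M1 := fun q : point => (q.1, K%:Z - 1 - q.2)) (N1 := fun q : point => (q.1, K%:Z - 1 - q.2))
    (M2 := fun q : point => (K%:Z - 1 - q.2, K%:Z + q.1)) (N2 := fun q : point => (q.2 - K%:Z, K%:Z - 1 - q.1))
    (M3 := fun q : point => (K%:Z + q.2, 2 * K%:Z - 1 - q.1)) (N3 := fun q : point => (2 * K%:Z - 1 - q.2, q.1 - K%:Z))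
    (M4 := fun q : point => (K%:Z + q.1, K%:Z - 1 - q.2))
    (N4 := fun q : point => (q.1 - K%:Z, K%:Z - 1 - q.2)); try eassumption; side.
- have -> : h4 (hilb n) = map d_o (hilb n) ++ U :: map id (hilb n) ++ R ::
     map id (hilb n) ++ D :: map d_f (hilb n) by rewrite /h4 !map_id.
  eapply ham4 with (K := K)
    (M1 := fun q : point => (q.2, q.1)) (N1 := fun q : point => (q.2, q.1))
    (M2 := fun q : point => (q.1, K%:Z + q.2)) (N2 := fun q : point => (q.1, q.2 - K%:Z))
    (M3 := fun q : point => (K%:Z + q.1, K%:Z + q.2)) (N3 := fun q : point => (q.1 - K%:Z, q.2 - K%:Z))
    (M4 := fun q : point => (2 * K%:Z - 1 - q.1, K%:Z - 1 - q.2))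
    (N4 := fun q : point => (2 * K%:Z - 1 - q.1, K%:Z - 1 - q.2)); try eassumption; side.
- rewrite /h5.
  eapply ham4 with (K := K)
    (M1 := fun q : point => (q.1, K%:Z - 1 - q.2)) (N1 := fun q : point => (q.1, K%:Z - 1 - q.2))
    (M2 := fun q : point => (K%:Z - 1 - q.2, K%:Z + q.1)) (N2 := fun q : point => (q.2 - K%:Z, K%:Z - 1 - q.1))
    (M3 := fun q : point => (K%:Z + q.2, 2 * K%:Z - 1 - q.1)) (N3 := fun q : point => (2 * K%:Z - 1 - q.2, q.1 - K%:Z))
    (M4 := fun q : point => (K%:Z + q.2, K%:Z - 1 - q.1))
    (N4 := fun q : point => (K%:Z - 1 - q.2, q.1 - K%:Z)); try eassumption; side.
Qed.
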